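(* Let $\{x_j\}_{j\ge1}$ be a bounded sequence in $\mathbb{R}$ taking infinitely many distinct values, and $\{a_j\}_{j\ge1}$ a summable sequence of positive numbers. Let $\mu=\sum_{j\ge1}a_j\delta_{x_j}$ and $d=\sup_{j,k}|x_j-x_k|$. Then the monic orthogonal polynomials $P_n(x;d\mu)$ satisfy, for all $n\ge1$, $$\|P_n\|_{L^2(\mathbb{R},d\mu)}\le d^n\Bigl(\sum_{j=n+1}^\infty a_j\Bigr)^{1/2}.$$ *)

(* Defs.v *)
From Stdlib Require Import Reals List.
Open Scope R_scope.

Fixpoint low_sum (c : nat -> R) (t : R) (n : nat) : R :=
  match n with
  | O => 0
  | S m => low_sum c t m + c m * t ^ m
  end.

Definition monic_poly (n : nat) (c : nat -> R) (t : R) : R :=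
  t ^ n + low_sum c t n.

(* Discrete measure mu = sum_j a_j delta_{x_j}.
   A monic degree-n polynomial (coefficients c) is the monic orthogonal
   polynomial P_n(x; d mu) iff it is orthogonal in L^2(mu) to every
   monomial t^k with k < n (equivalently to all polynomials of degree < n). *)
Definition is_monic_OP (a x : nat -> R) (n : nat) (c : nat -> R) : Prop :=
  forall k : nat, (k < n)%nat ->
    infinite_sum (fun j => a j * monic_poly n c (x j) * (x j) ^ k) 0.

Definition L2sq_is (a x : nat -> R) (p : R -> R) (s : R) : Prop :=
  infinite_sum (fun j => a j * (p (x j)) ^ 2) s.

(* Main.v *)
Require Import Defs.
From Stdlib Require Import Reals List Lra Lia.
Open Scope R_scope.

Definition Pdeg (m : nat) (f : R -> R) : Prop :=
  exists c, forall t, f t = low_sum c t m.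

Lemma low_sum_ext c c' t m :
  (forall k, (k < m)%nat -> c k = c' k) -> low_sum c t m = low_sum c' t m.
Proof.
  induction m; simpl; intros H; auto.
  rewrite IHm by (intros; apply H; lia). rewrite H by lia. reflexivity.
Qed.

Lemma low_sum_zero t m : low_sum (fun _ => 0) t m = 0.
Proof. induction m; simpl; auto. rewrite IHm; ring. Qed.

Lemma low_sum_add c c' t m :
  low_sum (fun k => c k + c' k) t m = low_sum c t m + low_sum c' t m.
Proof. induction m; simpl; auto. ring. rewrite IHm; ring. Qed.

Lemma low_sum_scal s c t m :
  low_sum (fun k => s * c k) t m = s * low_sum c t m.
Proof. induction m; simpl; auto. ring. rewrite IHm; ring. Qed.

Lemma low_sum_shift c t m :
  t * low_sum c t m = low_sum (fun k => match k with O => 0 | S k => c k end) t (S m).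
Proof.
  induction m; simpl. ring.
  simpl in IHm. rewrite <- IHm. ring.
Qed.

Lemma Pdeg_ext m f g : (forall t, f t = g t) -> Pdeg m f -> Pdeg m g.
Proof. intros H [c Hc]. exists c. intros t. rewrite <- H. auto. Qed.

Lemma Pdeg_add m f g : Pdeg m f -> Pdeg m g -> Pdeg m (fun t => f t + g t).
Proof.
  intros [c Hc] [c' Hc']. exists (fun k => c k + c' k). intros t.
  rewrite low_sum_add, Hc, Hc'. auto.
Qed.

Lemma Pdeg_scal m s f : Pdeg m f -> Pdeg m (fun t => s * f t).
Proof.
  intros [c Hc]. exists (fun k => s * c k). intros t. rewrite low_sum_scal, Hc. auto.
Qed.

Lemma Pdeg_shift m f : Pdeg m f -> Pdeg (S m) (fun t => t * f t).
Proof.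
  intros [c Hc]. eexists. intros t. rewrite Hc. apply low_sum_shift.
Qed.

Lemma Pdeg_mono m f : Pdeg m f -> Pdeg (S m) f.
Proof.
  intros [c Hc]. exists (fun k => if Nat.ltb k m then c k else 0). intros t.
  simpl. rewrite Nat.ltb_irrefl. rewrite Hc.
  rewrite (low_sum_ext c (fun k => if Nat.ltb k m then c k else 0)). ring.
  intros k Hk. apply Nat.ltb_lt in Hk. rewrite Hk. auto.
Qed.

Lemma Pdeg_pow m : Pdeg (S m) (fun t => t ^ m).
Proof.
  exists (fun k => if Nat.eqb k m then 1 else 0). intros t. simpl.
  rewrite Nat.eqb_refl.
  rewrite (low_sum_ext _ (fun _ => 0)). rewrite low_sum_zero. ring.
  intros k Hk. destruct (Nat.eqb_spec k m). lia. auto.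
Qed.

Fixpoint prodQ (x : nat -> R) (m : nat) (t : R) : R :=
  match m with O => 1 | S m => prodQ x m t * (t - x m) end.

Lemma prodQ_decomp x m : exists r, Pdeg m r /\ forall t, prodQ x m t = t ^ m + r t.
Proof.
  induction m.
  - exists (fun _ => 0). split. exists (fun _ => 0). intros; simpl; auto.
    intros; simpl; ring.
  - destruct IHm as [r [Hr Hq]].
    exists (fun t => t * r t + ((- x m) * t ^ m + (- x m) * r t)). split.
    + apply Pdeg_add. apply Pdeg_shift; auto.
      apply Pdeg_add. apply Pdeg_scal, Pdeg_pow. apply Pdeg_scal, Pdeg_mono; auto.
    + intros t. simpl. rewrite Hq. ring.
Qed.

Lemma prodQ_zero x m j : (j < m)%nat -> prodQ x m (x j) = 0.
Proof.
  induction m; intros H. lia. simpl.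
  destruct (Nat.eq_dec j m). subst. ring. rewrite IHm by lia. ring.
Qed.

Lemma prodQ_bound x d m t : (forall i, Rabs (t - x i) <= d) ->
  Rabs (prodQ x m t) <= d ^ m.
Proof.
  intros H. induction m; simpl. rewrite Rabs_R1; lra.
  rewrite Rabs_mult. rewrite Rmult_comm.
  apply Rmult_le_compat; auto using Rabs_pos.
Qed.

Lemma isum_zero : infinite_sum (fun _ => 0) 0.
Proof.
  intros eps He. exists O. intros n _.
  assert (sum_f_R0 (fun _ => 0) n = 0).
  { induction n; simpl; auto. rewrite IHn; ring. }
  rewrite H. unfold Rdist. rewrite Rminus_0_r, Rabs_R0. lra.
Qed.

Lemma isum_ext f g l : (forall j, f j = g j) -> infinite_sum f l -> infinite_sum g l.
Proof.
  intros H Hf eps He. destruct (Hf eps He) as [N HN]. exists N. intros n Hn.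
  rewrite <- (sum_eq f g n) by auto. auto.
Qed.

Lemma isum_plus f g l1 l2 : infinite_sum f l1 -> infinite_sum g l2 ->
  infinite_sum (fun j => f j + g j) (l1 + l2).
Proof.
  intros Hf Hg. change (Un_cv (sum_f_R0 (fun j => f j + g j)) (l1 + l2)).
  assert (H := CV_plus _ _ _ _ Hf Hg).
  intros eps He. destruct (H eps He) as [N HN]. exists N. intros n Hn.
  rewrite plus_sum. apply HN; auto.
Qed.

Lemma const_cv B : Un_cv (fun _ : nat => B) B.
Proof. intros eps He. exists O. intros. unfold Rdist. rewrite Rminus_diag, Rabs_R0. lra. Qed.

Lemma isum_scal s f l : infinite_sum f l -> infinite_sum (fun j => s * f j) (s * l).
Proof.
  intros Hf. assert (H := CV_mult _ _ _ _ (const_cv s) Hf).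
  intros eps He. destruct (H eps He) as [N HN]. exists N. intros n Hn.
  replace (sum_f_R0 (fun j => s * f j) n) with (s * sum_f_R0 f n). apply HN; auto.
  rewrite scal_sum. apply sum_eq. intros; ring.
Qed.

Lemma orth a x n c (hOP : is_monic_OP a x n c) m dd : (m <= n)%nat ->
  infinite_sum (fun j => a j * monic_poly n c (x j) * low_sum dd (x j) m) 0.
Proof.
  induction m; intros Hm.
  - simpl. eapply isum_ext; [|apply isum_zero]. intros; simpl; ring.
  - replace 0 with (0 + dd m * 0) by ring.
    eapply isum_ext; [| apply isum_plus; [apply IHm; lia | apply isum_scal; apply (hOP m); lia]].
    intros j. simpl. ring.
Qed.

Lemma sum_nonneg_mono f N k : (forall j, 0 <= f j) -> sum_f_R0 f N <= sum_f_R0 f (N + k).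
Proof.
  intros H. induction k. rewrite Nat.add_0_r; lra.
  rewrite Nat.add_succ_r. simpl. specialize (H (S (N + k))). lra.
Qed.

Lemma sum_shift_zero f m N : (forall j, (j < S m)%nat -> f j = 0) ->
  sum_f_R0 f (S m + N) = sum_f_R0 (fun i => f (S m + i)%nat) N.
Proof.
  intros H. assert (Hz : forall k, (k <= m)%nat -> sum_f_R0 f k = 0).
  { induction k; intros Hk; simpl. apply H; lia. rewrite IHk by lia. rewrite H by lia. ring. }
  induction N.
  - rewrite Nat.add_0_r. simpl. rewrite Hz by lia. rewrite Nat.add_0_r. ring.
  - rewrite Nat.add_succ_r. change (sum_f_R0 f (S (S m + N))) with (sum_f_R0 f (S m + N) + f (S (S m + N))).
    rewrite IHN. simpl. rewrite Nat.add_succ_r. reflexivity.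
Qed.

Theorem theorem5p5
  (x a : nat -> R)
  (hbdd : exists M : R, forall j, Rabs (x j) <= M)
  (hinf : ~ (exists l : list R, forall j, In (x j) l))
  (hpos : forall j, 0 < a j)
  (hsum : exists S : R, infinite_sum a S)
  (d : R)
  (hd : is_lub (fun r => exists j k : nat, r = Rabs (x j - x k)) d)
  (n : nat) (hn : (1 <= n)%nat)
  (c : nat -> R) (hOP : is_monic_OP a x n c)
  (N2 : R) (hN2 : L2sq_is a x (monic_poly n c) N2)
  (T : R) (hT : infinite_sum (fun i => a (n + i)%nat) T) :
  sqrt N2 <= d ^ n * sqrt T.
Proof.
  destruct hd as [hub _].
  assert (Hdx : forall j k, Rabs (x j - x k) <= d) by (intros; apply hub; eauto).
  assert (Hd0 : 0 <= d) by (specialize (Hdx O O); pose proof (Rabs_pos (x O - x O)); lra).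
  assert (HT0 : 0 <= T).
  { apply Rle_trans with (sum_f_R0 (fun i => a (n + i)%nat) O).
    simpl. apply Rlt_le, hpos. apply sum_incr; auto. intros; apply Rlt_le, hpos. }
  destruct (prodQ_decomp x n) as [r [[cr Hr] Hq]].
  set (P := monic_poly n c).
  set (dd := fun k => cr k + -1 * c k).
  set (Dd := fun t => low_sum dd t n).
  assert (HQ : forall t, prodQ x n t = P t + Dd t).
  { intros t. rewrite Hq, Hr. unfold P, Dd, dd, monic_poly.
    rewrite low_sum_add, low_sum_scal. ring. }
  assert (Horth := orth a x n c hOP n dd (Nat.le_refl n)).
  assert (Hu := isum_plus _ _ _ _ hN2 (isum_scal 2 _ _ Horth)).
  change (Un_cv (sum_f_R0 (fun j => a j * monic_poly n c (x j) ^ 2 +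
     2 * (a j * monic_poly n c (x j) * low_sum dd (x j) n))) (N2 + 2 * 0)) in Hu.
  assert (HB : forall N, sum_f_R0 (fun j => a j * monic_poly n c (x j) ^ 2 +
     2 * (a j * monic_poly n c (x j) * low_sum dd (x j) n)) N <= d ^ n * d ^ n * T).
  { intros N.
    apply Rle_trans with (sum_f_R0 (fun j => a j * prodQ x n (x j) ^ 2) N).
    { apply sum_Rle. intros j _. rewrite HQ. unfold P, Dd.
      pose proof (hpos j). set (p := monic_poly n c (x j)). set (q := low_sum dd (x j) n).
      assert (0 <= a j * (q * q)) by (apply Rmult_le_pos; [lra | apply Rle_0_sqr]).
      replace (a j * (p + q) ^ 2) with (a j * p ^ 2 + 2 * (a j * p * q) + a j * (q*q)) by ring.
      lra. }
    assert (Hnn : forall j, 0 <= a j * prodQ x n (x j) ^ 2).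
    { intros j. apply Rmult_le_pos. apply Rlt_le, hpos. rewrite <- Rsqr_pow2. apply Rle_0_sqr. }
    apply Rle_trans with (sum_f_R0 (fun j => a j * prodQ x n (x j) ^ 2) (N + n)).
    { apply sum_nonneg_mono; auto. }
    destruct n as [|m]. lia.
    rewrite Nat.add_comm. rewrite sum_shift_zero.
    2:{ intros j Hj. rewrite prodQ_zero by auto. ring. }
    apply Rle_trans with (sum_f_R0 (fun i => a (S m + i)%nat * (d ^ S m * d ^ S m)) N).
    { apply sum_Rle. intros i _. apply Rmult_le_compat_l. apply Rlt_le, hpos.
      assert (Hb := prodQ_bound x d (S m) (x (S m + i)%nat) (fun k => Hdx _ k)).
      assert (Hp := Rabs_pos (prodQ x (S m) (x (S m + i)%nat))).
      rewrite <- (pow2_abs (prodQ x (S m) (x (S m + i)%nat))). simpl pow at 1.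
      rewrite Rmult_1_r. apply Rmult_le_compat; auto. }
    rewrite <- scal_sum. apply Rmult_le_compat_l.
    apply Rmult_le_pos; apply pow_le; auto.
    apply sum_incr; auto. intros; apply Rlt_le, hpos. }
  assert (HN2 : N2 <= d ^ n * d ^ n * T).
  { replace N2 with (N2 + 2 * 0) by ring. eapply Rle_cv_lim; [exact HB | exact Hu | apply const_cv]. }
  assert (Hdn : 0 <= d ^ n) by (apply pow_le; auto).
  apply Rle_trans with (sqrt (d ^ n * d ^ n * T)).
  apply sqrt_le_1_alt; auto.
  rewrite sqrt_mult_alt. rewrite sqrt_square; auto. lra.
  apply Rmult_le_pos; auto.
Qed.
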